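(* Let $f:\{0,\dots,r-1\}^n\to\mathbb{R}$ be an $r$-valued fitness function with a neutral position $i\in\{1,\dots,n\}$. Consider the $r$-cGA optimizing $f$ with population size $K$. Then for every $j\in\{0,\dots,r-1\}$ and $T\in\mathbb{N}$, \[\Pr\left[\max_{t\in\{0,\dots,T\}}\left|p^{(t)}_{i,j}-p^{(0)}_{i,j}\right|\geq \frac{1}{2r}\right]\leq 2\exp\left(-\frac{K^2}{8Tr^2}\right).\]
   Context: Let $n\geq 1$, $r\geq 2$ be integers and $K>0$. The $r$-cGA maximizing $f$ maintains frequencies $p^{(t)}_{i,j}$ ($i\in\{1,\dots,n\}$, $j\in\{0,\dots,r-1\}$), initialized to $p^{(0)}_{i,j}=1/r$. In iteration $t$ it samples $x,y\in\{0,\dots,r-1\}^n$ independently, each position $i$ independently with $\Pr[x_i=j]=p^{(t)}_{i,j}$; if $f(x)<f(y)$ it swaps $x$ and $y$; then it sets $p^{(t+1)}_{i,j}=p^{(t)}_{i,j}+\frac1K(\mathbf{1}[x_i=j]-\mathbf{1}[y_i=j])$ for all $i,j$, with no margins restricting frequencies. A position $i$ is neutral for $f$ if for all $x,x'$ agreeing on all positions other than $i$ we have $f(x)=f(x')$. *)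

(* Defs.v *)
From HB Require Import structures.
From mathcomp Require Import all_boot all_order all_algebra.
From mathcomp Require Import reals.
From mathcomp Require Import sequences.
From mathcomp.analysis Require Import exp.
Set Implicit Arguments. Unset Strict Implicit. Unset Printing Implicit Defensive.
Import Order.TTheory GRing.Theory Num.Theory.
Local Open Scope ring_scope.

Definition config (n r : nat) := {ffun 'I_n -> 'I_r}.

Definition freqs (R : realType) (n r : nat) := 'I_n -> 'I_r -> R.

Section RcGA.
Variables (R : realType) (n r : nat) (K : R) (f : config n r -> R).

Definition p_init : freqs R n r := fun _ _ => (r%:R)^-1.

Definition sample_prob (p : freqs R n r) (x : config n r) : R :=
  \prod_(k < n) p k (x k).

Definition cga_update (p : freqs R n r) (xy : config n r * config n r)
  : freqs R n r :=
  let: (x, y) := if f xy.1 < f xy.2 then (xy.2, xy.1) else xy in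
  fun k j => p k j + K^-1 * ((x k == j)%:R - (y k == j)%:R).

Definition cga_traj (s : seq (config n r * config n r)) (t : nat)
  : freqs R n r := foldl cga_update p_init (take t s).

Definition history_prob (T : nat) (s : T.-tuple (config n r * config n r))
  : R :=
  \prod_(t < T) (sample_prob (cga_traj s t) (tnth s t).1 *
                 sample_prob (cga_traj s t) (tnth s t).2).

Definition prob_max_dev (T : nat) (i : 'I_n) (j : 'I_r) : R :=
  \sum_(s : T.-tuple (config n r * config n r))
     history_prob s *
     (((2 * r%:R)^-1 <=
        \big[Num.max/0]_(t < T.+1)
           `|cga_traj s t i j - cga_traj s 0 i j|)%R%:R).

End RcGA.

Definition neutral (R : realType) (n r : nat) (f : config n r -> R)
  (i : 'I_n) : Prop :=
  forall x x' : config n r, (forall k, k != i -> x k = x' k) -> f x = f x'.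

(* Main.v *)
Require Import Defs.
From HB Require Import structures.
From mathcomp Require Import all_boot all_order all_algebra.
From mathcomp Require Import all_classical all_reals all_analysis.
From mathcomp Require Import ring lra zify.
Set Implicit Arguments. Unset Strict Implicit. Unset Printing Implicit Defensive.
Import Order.TTheory GRing.Theory Num.Theory.
Import numFieldNormedType.Exports.
Local Open Scope ring_scope.
Local Open Scope classical_set_scope.

Lemma fact_double_ge k : (2 ^ k * k`! <= (k.*2)`!)%N.
Proof.
elim: k => // k IH.
rewrite doubleS !factS expnS.
rewrite (_ : 2 * 2 ^ k * (k.+1 * k`!) = (k.+1).*2 * (2 ^ k * k`!))%N; last first.
  by rewrite -!muln2; ring.
rewrite [X in (_ <= X)%N]mulnA; apply: leq_mul => //.
by rewrite doubleS; lia.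
Qed.

Section Cosh.
Variable R : realType.

Let a (y : R) k := exp_coeff y k + exp_coeff (- y) k.

Lemma a_even (y : R) m : a y m.*2 = 2 * (y ^+ m.*2 / (m.*2)`!%:R).
Proof.
rewrite /a /exp_coeff /= exprNn -signr_odd odd_double expr0 mul1r.
by rewrite mulr2n mulrDl mul1r.
Qed.

Lemma a_odd (y : R) m : a y m.*2.+1 = 0.
Proof.
rewrite /a /exp_coeff /= exprNn -signr_odd /= odd_double /= expr1.
by rewrite mulN1r mulNr addrN.
Qed.

Lemma a_ge0 (y : R) k : 0 <= a y k.
Proof.
rewrite -[k]odd_double_half; case: (odd k) => /=.
  by rewrite add1n a_odd.
rewrite add0n a_even mulr_ge0 // divr_ge0 //.
by rewrite -mul2n exprM exprn_ge0 // sqr_ge0.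
Qed.

Lemma sum_a_double (y : R) N :
  \sum_(0 <= k < N.*2) a y k = \sum_(0 <= m < N) a y m.*2.
Proof.
elim: N => [|N IH]; first by rewrite !big_geq.
rewrite doubleS !big_nat_recr //= IH a_odd addr0.
by [].
Qed.

Lemma coeff_le (y : R) m :
  y ^+ m.*2 / (m.*2)`!%:R <= exp_coeff (y ^+ 2 / 2) m.
Proof.
have y0 : 0 <= y ^+ m.*2 by rewrite -(mul2n m) exprM exprn_ge0 // sqr_ge0.
rewrite /exp_coeff /= expr_div_n -(exprM y 2 m) mul2n -mulrA ler_wpM2l //.
rewrite -invfM lef_pV2 ?posrE ?mulr_gt0 ?exprn_gt0 ?ltr0n ?fact_gt0 //.
by rewrite -natrX -natrM ler_nat fact_double_ge.
Qed.

Lemma cosh_le (y : R) : expR y + expR (- y) <= 2 * expR (y ^+ 2 / 2).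
Proof.
rewrite /expR -limD; [|exact: is_cvg_series_exp_coeff..].
apply: limr_le; first by apply: is_cvgD; exact: is_cvg_series_exp_coeff.
near=> N.
rewrite /series /=.
change (\sum_(0 <= k < N) exp_coeff y k + \sum_(0 <= k < N) exp_coeff (- y) k <= 2 * limn (series (exp_coeff (y ^+ 2 / 2)))).
rewrite -big_split /=.
have q0 : 0 <= y ^+ 2 / 2 :> R by rewrite divr_ge0 // sqr_ge0.
apply: (@le_trans _ _ (\sum_(0 <= k < N.*2) a y k)).
  rewrite [leRHS](@big_cat_nat _ _ _ N) //=; last by lia.
  rewrite -[X in X <= _]addr0; apply: lerD; first exact: lexx.
  by rewrite sumr_ge0 // => k _; exact: a_ge0.
rewrite sum_a_double.
apply: (@le_trans _ _ (2 * \sum_(0 <= m < N) exp_coeff (y ^+ 2 / 2) m)).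
  rewrite mulr_sumr; apply: ler_sum => m _; rewrite a_even ler_wpM2l //.
  exact: coeff_le.
rewrite ler_wpM2l //.
have := nondecreasing_cvgn_le _ (is_cvg_series_exp_coeff (y ^+ 2 / 2)) N.
apply.
apply: nondecreasing_series => k _ _; exact: exp_coeff_ge0.
Unshelve. all: by end_near.
Qed.
End Cosh.


Section Main.
Variables (R : realType) (n r : nat) (K : R) (f : config n r -> R)
  (i : 'I_n) (j : 'I_r).
Hypothesis neutral_i : neutral f i.
Hypothesis hr : (2 <= r)%N.
Hypothesis hK : 0 < K.

Local Notation X := (config n r * config n r)%type.
Local Notation upd := (cga_update K f).
Local Notation sp := (@sample_prob R n r).
Let c0 : R := (r%:R)^-1.
Let d : R := (2 * r%:R)^-1.

Fixpoint hp (p : freqs R n r) (s : seq X) : R :=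
  match s with
  | [::] => 1
  | a :: s' => sp p a.1 * sp p a.2 * hp (upd p a) s'
  end.

Fixpoint Ev (p : freqs R n r) (s : seq X) : bool :=
  match s with
  | [::] => d <= `|p i j - c0|
  | a :: s' => (d <= `|p i j - c0|) || Ev (upd p a) s'
  end.

Definition Phi m p := \sum_(s : m.-tuple X) hp p s * (Ev p s)%:R.
Definition Mass m p := \sum_(s : m.-tuple X) hp p s.

Definition rs (p : freqs R n r) := forall k, \sum_(a < r) p k a = 1.

Lemma tuple_sum_cons m (F : m.+1.-tuple X -> R) :
  \sum_(s : m.+1.-tuple X) F s =
  \sum_(a : X) \sum_(s : m.-tuple X) F [tuple of a :: s].
Proof.
rewrite (pair_bigA _ (fun a (s : m.-tuple X) => F [tuple of a :: s])) /=.
rewrite (reindex (fun q : X * m.-tuple X => [tuple of q.1 :: q.2])) //=.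
exists (fun t : m.+1.-tuple X => (thead t, [tuple of behead t])).
  by move=> [a s] _ /=; rewrite theadE; congr (_, _); apply: val_inj.
by move=> t _; rewrite [RHS]tuple_eta.
Qed.

Lemma hp_prod (p : freqs R n r) (s : seq X) x0 :
  \prod_(t < size s) (sp (foldl upd p (take t s)) (nth x0 s t).1 *
                      sp (foldl upd p (take t s)) (nth x0 s t).2) = hp p s.
Proof.
elim: s p => [|a s IH] p /=; first by rewrite big_ord0.
by rewrite big_ord_recl /= IH.
Qed.

Lemma Ev_max (p : freqs R n r) (s : seq X) :
  (d <= \big[Num.max/0]_(t < (size s).+1)
          `|foldl upd p (take t s) i j - c0|) = Ev p s.
Proof.
have d0 : 0 < d by rewrite /d invr_gt0 mulr_gt0 // ltr0n; lia.
elim: s p => [|a s IH] p /=.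
  by rewrite big_ord_recl big_ord0 le_max [d <= 0]leNgt d0 orbF.
by rewrite big_ord_recl le_max /= -IH.
Qed.

Lemma marginal (p : freqs R n r) (h : 'I_r -> R) : rs p ->
  \sum_(x : config n r) sp p x * h (x i) = \sum_(a < r) p i a * h a.
Proof.
move=> rsp.
transitivity (\sum_(x : {ffun 'I_n -> 'I_r})
   \prod_(k < n) (p k (x k) * (if k == i then h (x k) else 1))).
  apply: eq_bigr => x _; rewrite /sample_prob big_split /=.
  congr (_ * _); rewrite (bigD1 i) //= eqxx big1 ?mulr1 // => k /negbTE -> //.
rewrite -(bigA_distr_bigA (fun k a => p k a * (if k == i then h a else 1))).
rewrite (bigD1 i) //= [X in _ * X]big1 ?mulr1; first by apply: eq_bigr => a _; rewrite eqxx.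
move=> k /negbTE ki; rewrite -[RHS](rsp k); apply: eq_bigr => a _.
by rewrite ki mulr1.
Qed.

Lemma pair_marginal (p : freqs R n r) (h : 'I_r -> 'I_r -> R) : rs p ->
  \sum_(a : X) sp p a.1 * sp p a.2 * h (a.1 i) (a.2 i) =
  \sum_(b < r) p i b * \sum_(c < r) p i c * h b c.
Proof.
move=> rsp.
rewrite -(pair_bigA _ (fun x y => sp p x * sp p y * h (x i) (y i))) /=.
rewrite -(marginal (fun b => \sum_(c < r) p i c * h b c)) //.
apply: eq_bigr => x _; rewrite -(marginal (h (x i))) // mulr_sumr.
by apply: eq_bigr => y _; rewrite mulrA.
Qed.

Definition setc (x : config n r) (v : 'I_r) : config n r :=
  [ffun k => if k == i then v else x k].

Definition sw (a : X) : X := (setc a.1 (a.2 i), setc a.2 (a.1 i)).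

Lemma setc_i x v : setc x v i = v.
Proof. by rewrite /setc ffunE eqxx. Qed.

Lemma sw_inv : involutive sw.
Proof.
move=> [x y]; rewrite /sw /= !setc_i; congr (_, _); apply/ffunP => k;
  rewrite !ffunE; case: eqP => // ->; reflexivity.
Qed.

Lemma f_setc x v : f (setc x v) = f x.
Proof. by apply: neutral_i => k ki; rewrite ffunE (negbTE ki). Qed.

Lemma sp_sw p (a : X) : sp p (sw a).1 * sp p (sw a).2 = sp p a.1 * sp p a.2.
Proof.
rewrite /sample_prob -!big_split /=; apply: eq_bigr => k _.
rewrite !ffunE; case: eqP => [->|] //; exact: mulrC.
Qed.

Lemma upd_eq p (x y : config n r) k b :
  upd p (x, y) k b =
  if f x < f y then p k b + K^-1 * ((y k == b)%:R - (x k == b)%:R)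
  else p k b + K^-1 * ((x k == b)%:R - (y k == b)%:R).
Proof. by rewrite /cga_update /=; case: ifP. Qed.

Lemma swap_sum p (g : R -> R) :
  \sum_(a : X) sp p a.1 * sp p a.2 * g (upd p a i j) =
  \sum_(a : X) sp p a.1 * sp p a.2 *
      g (p i j + K^-1 * ((a.1 i == j)%:R - (a.2 i == j)%:R)).
Proof.
rewrite (bigID (fun a : X => f a.1 < f a.2)) /=.
rewrite [RHS](bigID (fun a : X => f a.1 < f a.2)) /=.
congr (_ + _); last first.
  by apply: eq_bigr => -[x y] /= /negbTE H; rewrite upd_eq H.
rewrite [RHS](reindex_inj (can_inj sw_inv)) /=.
apply: eq_big => -[x y] /=; first by rewrite !f_setc.
move=> H; rewrite upd_eq H !setc_i; congr (_ * _); exact: esym (sp_sw p (x, y)).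
Qed.

Lemma sum_pred (q : 'I_r -> R) (F : 'I_r -> R) (G : bool -> R) :
  \sum_(b < r) q b = 1 -> (forall b, F b = G (b == j)) ->
  \sum_(b < r) q b * F b = q j * G true + (1 - q j) * G false.
Proof.
move=> q1 FG; rewrite (bigD1 j) //= FG eqxx; congr (_ + _).
have -> : 1 - q j = \sum_(b < r | b != j) q b.
  by rewrite -q1 (bigD1 j) //= addrC addrK.
rewrite big_distrl /=; apply: eq_bigr => b /negbTE bj.
by rewrite FG bj.
Qed.

Lemma step_sum p (g : R -> R) : rs p ->
  \sum_(a : X) sp p a.1 * sp p a.2 * g (upd p a i j) =
  (p i j ^+ 2 + (1 - p i j) ^+ 2) * g (p i j) +
  p i j * (1 - p i j) * (g (p i j + K^-1) + g (p i j - K^-1)).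
Proof.
move=> rsp; rewrite swap_sum.
rewrite (pair_marginal
  (fun b c => g (p i j + K^-1 * ((b == j)%:R - (c == j)%:R)))) //.
set u := p i j.
rewrite (@sum_pred _ _ (fun e => u * g (u + K^-1 * (e%:R - true%:R)) +
                      (1 - u) * g (u + K^-1 * (e%:R - false%:R))) (rsp i)); last first.
  move=> b.
  by rewrite (@sum_pred _ _ (fun e => g (u + K^-1 * ((b == j)%:R - e%:R))) (rsp i)).
rewrite /= mulr1n mulr0n subrr !subr0 sub0r !mulr0 !addr0 mulr1 mulrN1 -/u.
ring.
Qed.

Lemma rs_init : rs (@p_init R n r).
Proof.
move=> k; rewrite /p_init sumr_const card_ord -(mulr_natr (r%:R^-1)) mulVf //.
by rewrite pnatr_eq0; lia.
Qed.

Lemma sum_eq1 (v : 'I_r) : \sum_(b < r) (v == b)%:R = 1 :> R.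
Proof.
rewrite (bigD1 v) //= eqxx big1 ?addr0 // => b bv.
by rewrite eq_sym (negbTE bv).
Qed.

Lemma rs_upd p a : rs p -> rs (upd p a).
Proof.
move=> rsp k; case: a => x y; rewrite /cga_update /=.
by case: ifP => _ /=; rewrite big_split /= rsp -mulr_sumr sumrB !sum_eq1
  subrr mulr0 addr0.
Qed.

Lemma tuple0_sum (F : 0.-tuple X -> R) : \sum_(s : 0.-tuple X) F s = F [tuple].
Proof.
rewrite (big_pred1 [tuple]) // => s /=.
by apply/esym/eqP; exact: tuple0.
Qed.

Lemma Mass_1 m p : rs p -> Mass m p = 1.
Proof.
elim: m p => [|m IH] p rsp; rewrite /Mass.
  by rewrite tuple0_sum.
rewrite tuple_sum_cons /=.
transitivity (\sum_(a : X) sp p a.1 * sp p a.2 * (fun _ => 1) (upd p a i j)).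
  apply: eq_bigr => a _; rewrite -mulr_sumr; congr (_ * _).
  exact: (IH _ (rs_upd a rsp)).
rewrite (step_sum (fun _ => 1)) //=; ring.
Qed.

Lemma Phi_S m p : rs p -> Phi m.+1 p =
  if d <= `|p i j - c0| then 1
  else \sum_(a : X) sp p a.1 * sp p a.2 * Phi m (upd p a).
Proof.
move=> rsp; rewrite /Phi tuple_sum_cons /=; case: ifP => st /=.
  transitivity (Mass m.+1 p); last exact: Mass_1.
  rewrite /Mass tuple_sum_cons; apply: eq_bigr => a _; apply: eq_bigr => s _.
  by rewrite /= mulr1.
apply: eq_bigr => a _; rewrite mulr_sumr; apply: eq_bigr => s _.
by rewrite mulrA.
Qed.

Fixpoint phi m (u : R) : R :=
  match m with
  | 0 => (d <= `|u - c0|)%R%:R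
  | m'.+1 => if d <= `|u - c0| then 1 else
      (u ^+ 2 + (1 - u) ^+ 2) * phi m' u +
      u * (1 - u) * (phi m' (u + K^-1) + phi m' (u - K^-1))
  end.

Lemma Phi_phi m p : rs p -> Phi m p = phi m (p i j).
Proof.
elim: m p => [|m IH] p rsp.
  by rewrite /Phi tuple0_sum /= mul1r.
rewrite Phi_S //=; case: ifP => // _.
rewrite -(step_sum (phi m)) //; apply: eq_bigr => a _.
by rewrite IH //; apply: rs_upd.
Qed.

Lemma expR_ge1 (z : R) : 0 <= z -> 1 <= expR z.
Proof. move=> z0; apply: le_trans (expR_ge1Dx z); lra. Qed.

Lemma exp_sum_ge2 (x : R) : 2 <= expR x + expR (- x).
Proof. have := expR_ge1Dx x; have := expR_ge1Dx (- x); lra. Qed.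

Definition ee (mu C u : R) := expR (mu * (u - c0) + C).

Lemma exp_step mu C u w (c : R) : 0 <= w -> w <= 1/2 ->
  (1 - 2 * w) * ee mu C u + w * (ee mu C (u + c) + ee mu C (u - c)) <=
  ee mu C u * expR ((mu * c) ^+ 2 / 2).
Proof.
move=> w0 w1; rewrite /ee.
have -> : mu * ((u + c) - c0) + C = (mu * (u - c0) + C) + mu * c by ring.
have -> : mu * ((u - c) - c0) + C = (mu * (u - c0) + C) + - (mu * c) by ring.
rewrite (expRD (mu * (u - c0) + C) (mu * c)) (expRD (mu * (u - c0) + C) (- (mu * c))).
set E := expR (mu * (u - c0) + C); set a := expR (mu * c).
set b := expR (- (mu * c)); set Q := expR ((mu * c) ^+ 2 / 2).
have E0 : 0 <= E by apply: expR_ge0.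
have S2 : 2 <= a + b by apply: exp_sum_ge2.
have SQ : a + b <= 2 * Q by apply: cosh_le.
have h1 : 0 <= E * (a + b - 2) * (1 - 2 * w).
  by rewrite mulr_ge0 // ?mulr_ge0 //; lra.
have h2 : 0 <= E * (2 * Q - (a + b)) by rewrite mulr_ge0 //; lra.
rewrite -subr_ge0.
have -> : E * Q - ((1 - 2 * w) * E + w * (E * a + E * b)) =
  (E * (a + b - 2) * (1 - 2 * w) + E * (2 * Q - (a + b))) / 2 by field.
by rewrite divr_ge0 // addr_ge0.
Qed.

Definition Cm (lam : R) (m : nat) := - (lam * d) + m%:R * ((lam / K) ^+ 2 / 2).
Definition Bf lam m u := ee lam (Cm lam m) u + ee (- lam) (Cm lam m) u.

Lemma d_pos : 0 < d.
Proof. by rewrite /d invr_gt0 mulr_gt0 // ltr0n; lia. Qed.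

Lemma Bf_ge1 lam m u : 0 <= lam -> d <= `|u - c0| -> 1 <= Bf lam m u.
Proof.
move=> l0 hd.
have C0 : 0 <= m%:R * ((lam / K) ^+ 2 / 2) by rewrite mulr_ge0 // divr_ge0 // sqr_ge0.
rewrite /Bf /ee /Cm.
have [h|h] := leP 0 (u - c0).
  rewrite ger0_norm // in hd.
  have : lam * d <= lam * (u - c0) by rewrite ler_wpM2l.
  move=> hl.
  have e1 : 1 <= expR (lam * (u - c0) + (- (lam * d) + m%:R * ((lam / K) ^+ 2 / 2))).
    by apply: expR_ge1; lra.
  by apply: le_trans e1 _; rewrite lerDl expR_ge0.
rewrite ltr0_norm // in hd.
have : lam * d <= lam * (- (u - c0)) by rewrite ler_wpM2l.
move=> hl.
have e1 : 1 <= expR (- lam * (u - c0) + (- (lam * d) + m%:R * ((lam / K) ^+ 2 / 2))).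
  by apply: expR_ge1; rewrite mulNr; rewrite mulrN in hl; lra.
by apply: le_trans e1 _; rewrite lerDr expR_ge0.
Qed.

Lemma phi_le m (lam : R) u : 0 <= lam -> phi m u <= Bf lam m u.
Proof.
move=> l0; elim: m u => [|m IH] u /=.
  have [h|h] := boolP (d <= `|u - c0|).
    by rewrite mulr1n; exact: Bf_ge1.
  by rewrite mulr0n /Bf /ee addr_ge0 // expR_ge0.
have [h|h] := boolP (d <= `|u - c0|); first exact: Bf_ge1.
have hu : `|u - c0| < d by rewrite ltNge.
have r2 : 2 <= r%:R :> R by rewrite ler_nat.
have c0p : 0 < c0 by rewrite /c0 invr_gt0; lra.
have dc : d = c0 / 2 by rewrite /d /c0 invfM mulrC.
have c0le : c0 <= 1/2.
  rewrite /c0 -[1/2]invf_div divr1 lef_pV2 ?posrE //; lra.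
have [u1 u2] : c0 - d < u /\ u < c0 + d.
  by move: hu; rewrite ltr_norml; case/andP => ? ?; split; lra.
have w0 : 0 <= u * (1 - u) by rewrite mulr_ge0 //; lra.
have w1 : u * (1 - u) <= 1/2 by nra.
have -> : u ^+ 2 + (1 - u) ^+ 2 = 1 - 2 * (u * (1 - u)) by ring.
set w := u * (1 - u) in w0 w1 *.
apply: (@le_trans _ _ ((1 - 2 * w) * Bf lam m u +
     w * (Bf lam m (u + K^-1) + Bf lam m (u - K^-1)))).
  apply: lerD; first by apply: ler_wpM2l; [lra | exact: IH].
  by apply: ler_wpM2l => //; apply: lerD; exact: IH.
rewrite /Bf.
set C := Cm lam m.
have -> : (1 - 2 * w) * (ee lam C u + ee (- lam) C u) +
   w * (ee lam C (u + K^-1) + ee (- lam) C (u + K^-1) +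
        (ee lam C (u - K^-1) + ee (- lam) C (u - K^-1))) =
   ((1 - 2 * w) * ee lam C u + w * (ee lam C (u + K^-1) + ee lam C (u - K^-1))) +
   ((1 - 2 * w) * ee (- lam) C u +
      w * (ee (- lam) C (u + K^-1) + ee (- lam) C (u - K^-1))) by ring.
apply: lerD; (apply: le_trans; first exact: exp_step);
  rewrite /ee -expRD; rewrite ler_expR /C /Cm -addn1 natrD; rewrite le_eqVlt; apply/orP; left; apply/eqP; ring.
Qed.

Lemma final (T : nat) :
  prob_max_dev K f T i j <= 2 * expR (- (K ^+ 2 / (8 * T%:R * r%:R ^+ 2))).
Proof.
have r0 : (0 < r)%N by apply: ltnW.
pose o : 'I_r := Ordinal r0.
pose x0 : X := ([ffun=> o], [ffun=> o]).
have -> : prob_max_dev K f T i j = Phi T (@p_init R n r).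
  rewrite /prob_max_dev /Phi; apply: eq_bigr => s _.
  congr (_ * _).
    rewrite /history_prob -(hp_prod _ _ x0) size_tuple; apply: eq_bigr => t _.
    by rewrite /cga_traj !(tnth_nth x0).
  by rewrite -Ev_max size_tuple /cga_traj take0.
rewrite (Phi_phi T rs_init).
have K0 : K != 0 by rewrite gt_eqF.
have rn0 : r%:R != 0 :> R by rewrite pnatr_eq0 -lt0n.
case: T => [|T].
  rewrite /= /p_init subrr normr0; have -> : (d <= 0) = false by rewrite leNgt d_pos.
  by rewrite mulr0n mulr_ge0 // expR_ge0.
set lam := d * K ^+ 2 / T.+1%:R.
have l0 : 0 <= lam.
  apply: divr_ge0; last exact: ler0n. apply: mulr_ge0; [exact: ltW d_pos | exact: sqr_ge0].
apply: le_trans (phi_le T.+1 (p_init R i j) l0) _.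
rewrite /Bf /ee /p_init subrr !mulr0 !add0r.
have -> : Cm lam T.+1 = - (K ^+ 2 / (8 * T.+1%:R * r%:R ^+ 2)).
  rewrite /Cm /lam /d.
  have T0 : T.+1%:R != 0 :> R by rewrite pnatr_eq0.
  field.
  by rewrite rn0 K0 andbT paddr_eq0 ?ler01 ?ler0n // oner_eq0.
lra.
Qed.

End Main.

Local Close Scope classical_set_scope.

Theorem theorem2 (R : realType) (n r : nat) (K : R)
  (f : config n r -> R) (i : 'I_n) (j : 'I_r) (T : nat) :
  (1 <= n)%N -> (2 <= r)%N -> 0 < K ->
  neutral f i ->
  prob_max_dev K f T i j <=
    2 * expR (- (K ^+ 2 / (8 * T%:R * r%:R ^+ 2))).
Proof.
move=> _ hr hK hn.
exact: (@final R n r K f i j hn hr hK T).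
Qed.
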